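(* Let $(M,d)$ be a metric space with at least two points, let $W$ be a linear space and let $V\neq\{0\}$ be a $W$-spreading space. For every non-injective non-constant function $f\in\mathrm{Lip}(M,V)$, there exists a closed infinite dimensional linear subspace $X$ of $\mathrm{Lip}(M,V)$ such that: (i) $f\in X$ and every function in $X$ is non-injective; (ii) there exists an infinite dimensional linear subspace $Z$ of $X$ all of whose nonzero elements are non-constant functions, such that $Z\cap\mathrm{span}\{f\}=\{0\}$ and $\lambda f+g\in X$ (hence $\lambda f+g$ is non-injective) for every $\lambda\in\mathbb{K}$ and every $g\in Z$.
   Context: A $W$-spreading space is a linear subspace $V$ of the space $W^{\mathbb{N}}$ of $W$-valued sequences (coordinatewise operations) endowed with a complete norm $\|\cdot\|_V$ such that: whenever $(a_j)_{j=1}^\infty\in V$ and $\mathbb{N}_0=\{j_1<j_2<\cdots\}$ is an infinite subset of $\mathbb{N}$, the sequence $(b_k)_k$ with $b_k=a_i$ if $k=j_i$ and $b_k=0$ if $k\notin\mathbb{N}_0$ belongs to $V$ and $\|(b_k)_k\|_V\le\|(a_j)_j\|_V$. $\mathrm{Lip}(M,V)$ is the Banach space of bounded Lipschitz functions $f\colon M\to V$ with norm $\|f\|_{\mathrm{Lip}}=\max\{\|f\|_d,\|f\|_\infty\}$, where $\|f\|_d=\sup\{\|f(x)-f(y)\|_V/d(x,y): x\ne y\}$ and $\|f\|_\infty=\sup_{x}\|f(x)\|_V$. *)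

(* Defs.v *)
From mathcomp Require Import all_boot all_algebra.
From mathcomp Require Import boolp classical_sets reals.
From mathcomp Require Import complex.

Set Implicit Arguments.
Unset Strict Implicit.
Unset Printing Implicit Defensive.

Import GRing.Theory Num.Theory.
Local Open Scope ring_scope.

Section Defs.
(* R : the reals (values of distances and norms);
   K : the scalar field (R or C), with modulus absK : K -> R;
   W : a linear space over K; sequences in W are maps nat -> W
   (the paper's index set N = {1,2,...} is re-indexed from 0). *)
Variables (R : realType) (K : fieldType) (absK : K -> R) (W : lmodType K).

Definition seq0 : nat -> W := fun _ => 0.
Definition seqadd (a b : nat -> W) : nat -> W := fun k => a k + b k.
Definition seqscale (c : K) (a : nat -> W) : nat -> W := fun k => c *: a k.
Definition seqsub (a b : nat -> W) : nat -> W := fun k => a k - b k.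

Definition seq_linsub (V : set (nat -> W)) : Prop :=
  [/\ V seq0,
      (forall a b, V a -> V b -> V (seqadd a b)) &
      (forall c a, V a -> V (seqscale c a))].

Definition is_norm_on (V : set (nat -> W)) (nV : (nat -> W) -> R) : Prop :=
  [/\ nV seq0 = 0,
      (forall a, V a -> 0 <= nV a),
      (forall a, V a -> nV a = 0 -> a = seq0),
      (forall c a, V a -> nV (seqscale c a) = absK c * nV a) &
      (forall a b, V a -> V b -> nV (seqadd a b) <= nV a + nV b)].

Definition complete_on (V : set (nat -> W)) (nV : (nat -> W) -> R) : Prop :=
  forall u : nat -> (nat -> W), (forall n, V (u n)) ->
    (forall e : R, 0 < e -> exists N, forall m n, (N <= m)%N -> (N <= n)%N ->
        nV (seqsub (u m) (u n)) < e) ->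
    exists2 a, V a &
      forall e : R, 0 < e -> exists N, forall n, (N <= n)%N ->
        nV (seqsub (u n) a) < e.

(* b is the spreading of a along the infinite set N0 = {j 0 < j 1 < ...}:
   b (j i) = a i and b k = 0 for k outside N0. *)
Definition spreading_of (j : nat -> nat) (a b : nat -> W) : Prop :=
  (forall i, b (j i) = a i) /\ (forall k, ~ (exists i, j i = k) -> b k = 0).

Definition spreading_space (V : set (nat -> W)) (nV : (nat -> W) -> R) : Prop :=
  [/\ seq_linsub V, is_norm_on V nV, complete_on V nV &
      forall (a : nat -> W) (j : nat -> nat) (b : nat -> W),
        V a -> (forall i, (j i < j i.+1)%N) -> spreading_of j a b ->
        V b /\ nV b <= nV a].

Variable M : Type.

Definition is_metric (d : M -> M -> R) : Prop :=
  [/\ (forall x y, 0 <= d x y),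
      (forall x y, d x y = 0 <-> x = y),
      (forall x y, d x y = d y x) &
      (forall x y z, d x z <= d x y + d y z)].

Definition fzero : M -> nat -> W := fun _ _ => 0.
Definition fadd (f g : M -> nat -> W) : M -> nat -> W := fun x k => f x k + g x k.
Definition fscale (c : K) (f : M -> nat -> W) : M -> nat -> W :=
  fun x k => c *: f x k.
Definition fsub (f g : M -> nat -> W) : M -> nat -> W := fun x k => f x k - g x k.

Variables (d : M -> M -> R) (V : set (nat -> W)) (nV : (nat -> W) -> R).

Definition Lip : set (M -> nat -> W) :=
  [set f | (forall x, V (f x)) /\
           (exists C : R, forall x, nV (f x) <= C) /\
           (exists L : R, forall x y, nV (seqsub (f x) (f y)) <= L * d x y)].

(* ||f||_Lip = max(||f||_d, ||f||_oo) <= e, written out *)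
Definition lipnorm_le (f : M -> nat -> W) (e : R) : Prop :=
  (forall x, nV (f x) <= e) /\
  (forall x y, x <> y -> nV (seqsub (f x) (f y)) / d x y <= e).

Definition fun_linsub (X : set (M -> nat -> W)) : Prop :=
  [/\ X fzero,
      (forall f g, X f -> X g -> X (fadd f g)) &
      (forall c f, X f -> X (fscale c f))].

Definition lip_closed (X : set (M -> nat -> W)) : Prop :=
  forall f, Lip f ->
    (forall e : R, 0 < e -> exists2 g, X g & lipnorm_le (fsub f g) e) -> X f.

Definition infinite_dim (X : set (M -> nat -> W)) : Prop :=
  forall n : nat, exists v : nat -> (M -> nat -> W),
    (forall i, (i < n)%N -> X (v i)) /\
    (forall c : nat -> K,
        (fun x k => \sum_(i < n) c i *: v i x k) = fzero ->
        forall i, (i < n)%N -> c i = 0).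

Definition non_injective (f : M -> nat -> W) : Prop :=
  exists x y, x <> y /\ f x = f y.

Definition non_constant (f : M -> nat -> W) : Prop :=
  exists x y, f x <> f y.

End Defs.

Definition prop4p8_for (R : realType) (K : fieldType) (absK : K -> R) : Prop :=
  forall (W : lmodType K) (M : Type) (d : M -> M -> R)
         (V : set (nat -> W)) (nV : (nat -> W) -> R),
    is_metric d ->
    (exists x y : M, x <> y) ->
    spreading_space absK V nV ->
    (exists a, V a /\ a <> @seq0 _ W) ->
    forall f : M -> nat -> W,
      Lip d V nV f -> non_injective f -> non_constant f ->
      exists X : set (M -> nat -> W),
        [/\ ((forall g, X g -> Lip d V nV g) /\ fun_linsub X), lip_closed d V nV X, infinite_dim X,
            X f /\ (forall g, X g -> non_injective g) &
            exists Z : set (M -> nat -> W),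
              [/\ ((forall g, Z g -> X g) /\ fun_linsub Z), infinite_dim Z,
                  (forall g, Z g -> g <> @fzero _ W M -> non_constant g),
                  (forall g, Z g -> (exists c : K, g = fscale c f) -> g = @fzero _ W M) &
                  (forall (c : K) g, Z g -> X (fadd (fscale c f) g))]].

(* Main.v *)
Require Import Defs.
From mathcomp Require Import all_boot all_algebra.
From mathcomp Require Import boolp classical_sets reals.
From mathcomp Require Import complex.
From mathcomp Require Import all_order zify ring lra.
Import Order.TTheory GRing.Theory Num.Theory.
Local Open Scope ring_scope.
Set Implicit Arguments.
Unset Strict Implicit.
Definition sh (K : fieldType) (W : lmodType K) (m : nat) (a : nat -> W) : nat -> W :=
  fun k => if (m <= k)%N then a (k - m)%N else 0.

Definition Sc (K : fieldType) (W : lmodType K) (N : nat) (c : nat -> K) (a : nat -> W) : nat -> W :=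
  fun k => \sum_(n < N) c n *: sh n.+1 a k.

Lemma first_nz (K : fieldType) (W : lmodType K) (a : nat -> W) :
  a <> @seq0 _ W -> exists i0, a i0 != 0 /\ forall i, (i < i0)%N -> a i = 0.
Proof.
move=> Ha.
have ex : exists n, a n != 0.
  apply/not_existsP => H; apply: Ha; apply/funext => n.
  by move/negP: (H n); rewrite negbK => /eqP.
case: (ex_minnP ex) => i0 Hi0 Hmin; exists i0; split => // i Hi.
apply/eqP; apply: contraTT Hi => H; rewrite -leqNgt; exact: Hmin.
Qed.

Lemma Sc_low (K : fieldType) (W : lmodType K) N c (a : nat -> W) i0 :
  (forall i, (i < i0)%N -> a i = 0) -> Sc N c a i0 = 0.
Proof.
move=> Hz; rewrite /Sc big1 // => n _; rewrite /sh; case: ifP => H; last by rewrite scaler0.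
by rewrite Hz ?scaler0 //; lia.
Qed.

Lemma Sc_key (K : fieldType) (W : lmodType K) N c (a : nat -> W) i0 :
  a i0 != 0 -> (forall i, (i < i0)%N -> a i = 0) ->
  (forall k, Sc N c a k = 0) -> forall n, (n < N)%N -> c n = 0.
Proof.
move=> Hnz Hz H; elim/ltn_ind => n IH Hn.
have := H (i0 + n.+1)%N; rewrite /Sc (bigD1 (Ordinal Hn)) //= big1 ?addr0.
  rewrite /sh leq_addl addnK => /eqP; rewrite scaler_eq0 (negbTE Hnz) orbF.
  by move/eqP.
move=> m Hm; case: (ltngtP m n) => [lt|gt|eq].
- by rewrite IH ?scale0r.
- rewrite /sh; case: ifP => Hle; last by rewrite scaler0.
  by rewrite Hz ?scaler0 //; lia.
- by move: Hm; rewrite (_ : m = Ordinal Hn) ?eqxx //; apply: val_inj.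
Qed.


Lemma sh_spread (R : realType) (K : fieldType) (absK : K -> R) (W : lmodType K)
  (V : set (nat -> W)) nV : spreading_space absK V nV ->
  forall m a, V a -> V (sh m a) /\ nV (sh m a) <= nV a.
Proof.
case=> _ _ _ Hsp m a Va; apply: (Hsp a (fun i => i + m)%N) => //.
split => [i|k Hk]; first by rewrite /sh leq_addl addnK.
rewrite /sh; case: ifP => // Hle; exfalso; apply: Hk; exists (k - m)%N; lia.
Qed.

Lemma V_sub (K : fieldType) (W : lmodType K) (V : set (nat -> W)) :
  seq_linsub V -> forall a b, V a -> V b -> V (seqsub a b).
Proof.
case=> _ Hadd Hsc a b Va Vb.
have -> : seqsub a b = seqadd a (seqscale (-1) b).
  by apply/funext => k; rewrite /seqsub/seqadd/seqscale scaleN1r.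
by apply: Hadd => //; apply: Hsc.
Qed.

Lemma Sc_sub (K : fieldType) (W : lmodType K) N c (a b : nat -> W) :
  seqsub (Sc N c a) (Sc N c b) = Sc N c (seqsub a b).
Proof.
apply/funext => k; rewrite /Sc /seqsub -sumrB; apply: eq_bigr => n _.
by rewrite -scalerBr /sh; case: ifP => //; rewrite subr0.
Qed.

Lemma Sc_V (R : realType) (K : fieldType) (absK : K -> R) (W : lmodType K)
  (V : set (nat -> W)) nV : spreading_space absK V nV ->
  forall N c a, V a -> V (Sc N c a) /\
     nV (Sc N c a) <= (\sum_(n < N) `|absK (c n)|) * nV a.
Proof.
move=> Hs; have [[V0 Vadd Vsc] [n0 nge nz nsc ntri] _ _] := Hs.
move=> N c a Va; elim: N => [|N [IHV IHn]].
  have -> : Sc 0 c a = @seq0 _ W by apply/funext => k; rewrite /Sc big_ord0.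
  by rewrite n0 big_ord0 mul0r.
have -> : Sc N.+1 c a = seqadd (Sc N c a) (seqscale (c N) (sh N.+1 a)).
  by apply/funext => k; rewrite /Sc big_ord_recr.
have [Vs ns] := sh_spread Hs N.+1 Va.
split; first by apply: Vadd => //; apply: Vsc.
apply: le_trans; first by apply: ntri => //; apply: Vsc.
rewrite nsc // big_ord_recr /= mulrDl lerD //.
have h1 := nge _ Vs; have h2 := ler_norm (absK (c N)); have h3 := normr_ge0 (absK (c N)).
nra.
Qed.

Lemma Lip_add (R : realType) (K : fieldType) (absK : K -> R) (W : lmodType K) (M : Type)
  (d : M -> M -> R) (V : set (nat -> W)) nV : spreading_space absK V nV ->
  forall f g, Lip d V nV f -> Lip d V nV g -> Lip d V nV (fadd f g).
Proof.
move=> [[V0 Vadd Vsc] [n0 nge nz nsc ntri] _ _] f g [Vf [[C1 HC1] [L1 HL1]]] [Vg [[C2 HC2] [L2 HL2]]].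
split; first by move=> x; exact: Vadd.
split.
  exists (C1 + C2) => x; apply: le_trans (ntri _ _ (Vf x) (Vg x)) _; exact: lerD.
exists (L1 + L2) => x y.
have -> : seqsub (fadd f g x) (fadd f g y) = seqadd (seqsub (f x) (f y)) (seqsub (g x) (g y)).
  by apply/funext => k; rewrite /seqsub/seqadd/fadd opprD addrACA.
have VS := V_sub (And3 V0 Vadd Vsc).
apply: le_trans (ntri _ _ (VS _ _ (Vf x) (Vf y)) (VS _ _ (Vg x) (Vg y))) _.
rewrite mulrDl; exact: lerD.
Qed.

Lemma Lip_scale (R : realType) (K : fieldType) (absK : K -> R) (W : lmodType K) (M : Type)
  (d : M -> M -> R) (V : set (nat -> W)) nV : spreading_space absK V nV ->
  forall c f, Lip d V nV f -> Lip d V nV (fscale c f).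
Proof.
move=> [[V0 Vadd Vsc] [n0 nge nz nsc ntri] _ _] c f [Vf [[C1 HC1] [L1 HL1]]].
have VS := V_sub (And3 V0 Vadd Vsc).
split; first by move=> x; exact: Vsc.
have h2 := ler_norm (absK c); have h3 := normr_ge0 (absK c).
split.
  exists (`|absK c| * C1) => x; rewrite /fscale.
  have -> : (fun k => c *: f x k) = seqscale c (f x) by [].
  rewrite nsc //; have := HC1 x; have := nge _ (Vf x); nra.
exists (`|absK c| * L1) => x y.
have -> : seqsub (fscale c f x) (fscale c f y) = seqscale c (seqsub (f x) (f y)).
  by apply/funext => k; rewrite /seqsub/seqscale/fscale scalerBr.
rewrite nsc ?VS //; have := HL1 x y; have := nge _ (VS _ _ (Vf x) (Vf y)).
rewrite -mulrA; nra.
by move=> *; apply: VS.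
Qed.

Lemma Lip_Sc (R : realType) (K : fieldType) (absK : K -> R) (W : lmodType K) (M : Type)
  (d : M -> M -> R) (V : set (nat -> W)) nV : spreading_space absK V nV ->
  forall N c f, Lip d V nV f -> Lip d V nV (fun x => Sc N c (f x)).
Proof.
move=> Hs N c f [Vf [[C1 HC1] [L1 HL1]]].
have [[V0 Vadd Vsc] [n0 nge nz nsc ntri] _ _] := Hs.
have VS := V_sub (And3 V0 Vadd Vsc).
set B := \sum_(n < N) `|absK (c n)|.
have B0 : 0 <= B by apply: sumr_ge0 => n _; exact: normr_ge0.
split; first by move=> x; case: (Sc_V Hs N c (Vf x)).
split.
  exists (B * C1) => x; case: (Sc_V Hs N c (Vf x)) => _ h.
  apply: le_trans h _; exact: ler_wpM2l.
exists (B * L1) => x y; rewrite Sc_sub.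
case: (Sc_V Hs N c (VS _ _ (Vf x) (Vf y))) => _ h.
apply: le_trans h _; rewrite -mulrA; exact: ler_wpM2l.
Qed.

Lemma pad_sum (K : fieldType) (W : lmodType K) (N1 N : nat) (c : nat -> K) (v : nat -> W) :
  (N1 <= N)%N ->
  \sum_(n < N) (if (n < N1)%N then c n else 0) *: v n = \sum_(n < N1) c n *: v n.
Proof.
move=> H; rewrite (big_ord_widen N (fun n => c n *: v n) H) big_mkcond /=.
rewrite [RHS]big_mkcond; apply: eq_bigr => n _ /=; by case: ifP => // _; rewrite scale0r.
Qed.

Lemma main_gen (R : realType) (K : fieldType) (absK : K -> R) : @prop4p8_for R K absK.
Proof.
move=> W M d V nV Hd _ Hs _ f Lf [x0 [y0 [Hxy Hf0]]] [p [q Hpq]].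
have [[V0 Vadd Vsc] [n0 nge nz nsc ntri] _ _] := Hs.
have VS := V_sub (And3 V0 Vadd Vsc).
pose X : set (M -> nat -> W) := fun g => Lip d V nV g /\ g x0 = g y0.
pose Z : set (M -> nat -> W) := fun g => exists N c, g = fun x => Sc N c (f x).
have XZ : forall g, Z g -> X g.
  move=> g [N [c ->]]; split; first exact: (Lip_Sc Hs N c Lf).
  by rewrite Hf0.
have Lip0 : Lip d V nV (@fzero _ W M).
  have -> : @fzero _ W M = fscale 0 f.
    by apply/funext => x; apply/funext => k; rewrite /fscale scale0r.
  exact: (Lip_scale Hs).
have linX : fun_linsub X.
  split.
  - by split.
  - move=> g h [Lg Hg] [Lh Hh]; split; first exact: (Lip_add Hs).
    by rewrite /fadd Hg Hh.
  - move=> c g [Lg Hg]; split; first exact: (Lip_scale Hs).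
    by rewrite /fscale Hg.
have [r Hr] : exists r, f r <> @seq0 _ W.
  case: (pselect (f p = @seq0 _ W)) => Hp; last by exists p.
  by exists q => Hq; apply: Hpq; rewrite Hp Hq.
have [i0 [Hi0 Hz0]] := first_nz Hr.
have infZ : infinite_dim Z.
  move=> n; exists (fun i x => sh i.+1 (f x)); split.
    move=> i _; exists i.+1, (fun m => (m == i)%:R).
    apply/funext => x; apply/funext => k; rewrite /Sc big_ord_recr /= big1.
      by rewrite eqxx scale1r add0r.
    move=> m _; rewrite (_ : (nat_of_ord m == i) = false) ?scale0r //.
    by apply/negbTE; rewrite neq_ltn ltn_ord.
  move=> c Hc i Hi; apply: (Sc_key Hi0 Hz0 _ Hi) => k.
  by have := congr1 (fun g => g r k) Hc.
have linZ : fun_linsub Z.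
  split.
  - exists 0%N, (fun _ => 0); apply/funext => x; apply/funext => k.
    by rewrite /Sc big_ord0.
  - move=> g h [N1 [c1 ->]] [N2 [c2 ->]].
    exists (N1 + N2)%N, (fun n => (if (n < N1)%N then c1 n else 0) + (if (n < N2)%N then c2 n else 0)).
    apply/funext => x; apply/funext => k; rewrite /fadd /Sc.
    rewrite -(@pad_sum _ _ N1 (N1 + N2) c1 (fun n => sh n.+1 (f x) k)) ?leq_addr //.
    rewrite -(@pad_sum _ _ N2 (N1 + N2) c2 (fun n => sh n.+1 (f x) k)) ?leq_addl //.
    by rewrite -big_split; apply: eq_bigr => n _; rewrite scalerDl.
  - move=> a g [N [c ->]]; exists N, (fun n => a * c n).
    apply/funext => x; apply/funext => k; rewrite /fscale /Sc scaler_sumr.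
    by apply: eq_bigr => n _; rewrite scalerA.
exists X; split.
- by split => // g [].
- move=> g Lg Happ; split => //.
  set u := seqsub (g x0) (g y0).
  have Vu : V u by apply: VS; case: Lg.
  have D0 : 0 < d x0 y0.
    case: Hd => dge deq _ _; rewrite lt_neqAle dge andbT.
    by apply/eqP => /esym /deq.
  have nu0 : nV u = 0.
    apply/eqP; rewrite eq_le nge // andbT; rewrite leNgt; apply/negP => upos.
    have t0 : 0 < nV u / d x0 y0 by apply: divr_gt0.
    have [h [Lh Hh] [_ Hl]] := Happ (nV u / d x0 y0 / 2) ltac:(lra).
    have := Hl x0 y0 Hxy.
    have -> : seqsub (fsub g h x0) (fsub g h y0) = u.
      apply/funext => k; rewrite /seqsub /fsub /u Hh.
      by rewrite opprB addrA subrK.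
    lra.
  have := nz u Vu nu0 => Hu; apply/funext => k.
  have := congr1 (fun s => s k) Hu; rewrite /u /seqsub /seq0 /= => /eqP.
  by rewrite subr_eq0 => /eqP.
- move=> n; have [v [Hv Hi]] := infZ n; exists v; split => //.
  by move=> i Hi'; apply: XZ; apply: Hv.
- split; first by split.
  by move=> g [_ Hg]; exists x0, y0.
- exists Z; split; [by split | exact: infZ | | |].
  + idtac.
  + move=> g [N [c ->]] Hg0; exists p, q => Heq; apply: Hg0.
    have Hd0 : seqsub (f p) (f q) <> @seq0 _ W.
      move=> H0; apply: Hpq; apply/funext => k.
      have := congr1 (fun s => s k) H0; rewrite /seqsub /seq0 /= => /eqP.
      by rewrite subr_eq0 => /eqP.
    have [j0 [Hj0 Hzj]] := first_nz Hd0.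
    have Hk : forall k, Sc N c (seqsub (f p) (f q)) k = 0.
      move=> k; rewrite -Sc_sub /seqsub.
      by have /= -> := congr1 (fun s => s k) Heq; rewrite subrr.
    have Hc0 := Sc_key Hj0 Hzj Hk.
    apply/funext => x; apply/funext => k; rewrite /Sc big1 // => n _.
    by rewrite Hc0 ?scale0r.
  + move=> g [N [c' Hg]] [c Hgc].
    have := congr1 (fun g => g r i0) Hgc; rewrite {1}Hg /= Sc_low // /fscale.
    move/esym/eqP; rewrite scaler_eq0 (negbTE Hi0) orbF => /eqP c0.
    by rewrite Hgc c0; apply/funext => x; apply/funext => k; rewrite /fscale scale0r.
  + move=> c g Zg; case: linX => _ Hadd Hsc; apply: Hadd; last exact: XZ.
    by apply: Hsc; split.
Qed.

Theorem proposition4p8 :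
  forall R : realType,
    @prop4p8_for R R (fun c : R => `|c|) /\
    @prop4p8_for R (complex R) (@Normc.normc R).
Proof.
by move=> R; split; [exact: (@main_gen R R (fun c : R => `|c|)) | exact: (@main_gen R (complex R) (@Normc.normc R))].
Qed.
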